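(* Let $\gamma_1,\gamma_2>0$ and consider the birth-death chain RDS $(\theta,\varphi)$ on $\mathbb{N}_0$ described in the context. Let $W_0=\{0,2,4,\dots\}$ and $W_1=\{1,3,5,\dots\}$. Then $(\theta,\varphi)$ is partially synchronizing with partition $\{W_0,W_1\}$: for each $i\in\{0,1\}$ and all $x,y\in W_i$, for $\mathbb{P}$-a.e. $q\in\mathcal{Q}_+$ there exists $n_0=n_0(x,y,q)\in\mathbb{N}_0$ with $\varphi^{n_0}_q(x)=\varphi^{n_0}_q(y)$.
   Context: Noise space: $\mathcal{Q}_+=\{q=(q_n)_{n\in\mathbb{N}_0}: q_n\in[0,1]\}$ with the product Borel $\sigma$-algebra and the product measure $\mathbb{P}=\lambda^{\mathbb{N}_0}$, $\lambda$ Lebesgue measure on $[0,1]$; shift $\theta(q_0,q_1,\dots)=(q_1,q_2,\dots)$. For $q\in\mathcal{Q}_+$ define $f_q:\mathbb{N}_0\to\mathbb{N}_0$ by $f_q(x)=x+1$ if $q_0<\frac{\gamma_1}{\gamma_1+\gamma_2x}$ and $f_q(x)=x-1$ otherwise. The cocycle is $\varphi^0_q(x)=x$ and $\varphi^n_q(x)=f_{\theta^{n-1}q}\circ\cdots\circ f_q(x)$ for $n\geq1$. An RDS is called synchronizing in $S$ if for every $x,y\in S$ and $\mathbb{P}$-a.e. $q$ there is $n_0$ with $\varphi^{n_0}_q(x)=\varphi^{n_0}_q(y)$; it is partially synchronizing with partition $\{W_0,\dots,W_{p-1}\}$ of the state space if it is synchronizing in each $W_i$. *)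

(* Defs.v *)
From HB Require Import structures.
From mathcomp Require Import all_boot all_order all_algebra.
From mathcomp Require Import all_classical all_reals all_analysis.
Set Implicit Arguments. Unset Strict Implicit. Unset Printing Implicit Defensive.
Import Order.TTheory GRing.Theory Num.Theory.
Local Open Scope classical_set_scope.
Local Open Scope ring_scope.

(* Noise space Q_+ : sequences (q_n)_{n in N0} of reals.  The product measure
   below is concentrated on [0,1]^N0 (see noise_law), so this is Q_+ up to a
   null set. *)
Definition noise (R : realType) := nat -> R.
HB.instance Definition _ (R : realType) := Choice.on (noise R).
HB.instance Definition _ (R : realType) := isPointed.Build (noise R) (fun _ => 0%R).

Definition coord_sets (R : realType) : set (set (noise R)) :=
  [set A | exists n (B : set R), measurable B /\ A = (fun q : noise R => q n) @^-1` B].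

Notation Qspace R := (g_sigma_algebraType (@coord_sets R)).

(* P is the product measure lambda^{N0} (lambda = Lebesgue measure on [0,1]):
   it is a probability measure whose value on every finite-dimensional
   cylinder {q | q_i in B_i, i < n} is prod_{i<n} lambda(B_i /\ [0,1]).
   This characterizes lambda^{N0} uniquely (pi-lambda theorem). *)
Definition noise_law (R : realType) (P : {measure set (Qspace R) -> \bar R}) : Prop :=
  P setT = 1%E /\
  forall (n : nat) (B : 'I_n -> set R), (forall i, measurable (B i)) ->
    P [set q : Qspace R | forall i : 'I_n, B i (q i)] =
    (\prod_(i < n) (@lebesgue_measure R) (B i `&` `[0%R, 1%R]))%E.

Definition theta (R : realType) (q : noise R) : noise R := fun k => q k.+1.

(* f_q(x) = x+1 if q_0 < g1/(g1+g2 x), x-1 otherwise (nat subtraction; the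
   case x = 0, q_0 >= 1 only occurs on a null set) *)
Definition fq (R : realType) (g1 g2 : R) (q : noise R) (x : nat) : nat :=
  if q 0%N < g1 / (g1 + g2 * x%:R) then x.+1 else x.-1.

Fixpoint phi (R : realType) (g1 g2 : R) (n : nat) (q : noise R) (x : nat) : nat :=
  match n with
  | 0 => x
  | n'.+1 => fq g1 g2 (iter n' (@theta R) q) (phi g1 g2 n' q x)
  end.

Definition synchronizing (R : realType) (P : {measure set (Qspace R) -> \bar R})
  (cocycle : nat -> noise R -> nat -> nat) (S : set nat) : Prop :=
  forall x y, S x -> S y ->
    {ae P, forall q : Qspace R, exists n0 : nat, cocycle n0 q x = cocycle n0 q y}.

Definition partially_synchronizing (R : realType)
  (P : {measure set (Qspace R) -> \bar R})
  (cocycle : nat -> noise R -> nat -> nat) (p : nat) (W : 'I_p -> set nat) : Prop :=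
  ((forall x : nat, exists i, W i x) /\
   (forall i j x, W i x -> W j x -> i = j) /\
   (forall i, W i !=set0)) /\
  forall i, synchronizing P cocycle (W i).

Definition W01 (i : 'I_2) : set nat := [set x : nat | odd x = (val i == 1%N)].

(* Main.v *)
Set Warnings "-all".
Require Import Defs.
From HB Require Import structures.
From mathcomp Require Import all_boot all_order all_algebra.
From mathcomp Require Import all_classical all_reals all_analysis.
From mathcomp Require Import ring lra.
Import Order.TTheory GRing.Theory Num.Theory.
Import numFieldNormedType.Exports.
Local Open Scope classical_set_scope.
Local Open Scope ring_scope.
Set Implicit Arguments. Unset Strict Implicit. Unset Printing Implicit Defensive.

Section All.
Variables (R : realType) (g1 g2 : R).
Hypotheses (hg1 : 0 < g1) (hg2 : 0 < g2).

Definition pr (y : nat) : R := g1 / (g1 + g2 * y%:R).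

Lemma den_gt0 y : 0 < g1 + g2 * y%:R.
Proof. by rewrite ltr_wpDr // mulr_ge0 // ltW. Qed.

Lemma pr_gt0 y : 0 < pr y.
Proof. by rewrite /pr divr_gt0 // den_gt0. Qed.

Lemma pr_le1 y : pr y <= 1.
Proof.
rewrite /pr ler_pdivrMr ?den_gt0 // mul1r.
by rewrite lerDl mulr_ge0 // ltW.
Qed.

Lemma pr0 : pr 0 = 1.
Proof. by rewrite /pr mulr0 addr0 divff // gt_eqF. Qed.

Lemma pr_anti a b : (a <= b)%N -> pr b <= pr a.
Proof.
move=> ab; rewrite /pr ler_pdivrMr ?den_gt0 //.
rewrite mulrAC ler_pdivlMr ?den_gt0 //.
by rewrite ler_pM2l // lerD2l ler_pM2l // ler_nat.
Qed.

Lemma fqE (q : noise R) x : fq g1 g2 q x = if q 0%N < pr x then x.+1 else x.-1.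
Proof. by []. Qed.

Lemma iter_theta k (q : noise R) i : iter k (@theta R) q i = q (i + k)%N.
Proof. by elim: k i => [|k IH] i /=; rewrite ?addn0 // /theta IH addnS. Qed.

Lemma phiS n (q : noise R) y :
  phi g1 g2 n.+1 q y = phi g1 g2 n (theta q) (fq g1 g2 q y).
Proof.
elim: n y => [|n IH] y //=.
by rewrite -IH /= -iterS iterSr.
Qed.

Lemma parity_gap a b : (a < b)%N -> odd a = odd b -> (a.+2 <= b)%N.
Proof.
move=> ab oab; rewrite ltn_neqAle ab andbT; apply/eqP => E.
by move: oab; rewrite -E /=; case: (odd a).
Qed.

Lemma odd_pred n : (0 < n)%N -> odd n.-1 = ~~ odd n.
Proof. by case: n => // n _ /=; rewrite negbK. Qed.

Lemma step_inv (t : noise R) a b : t 0%N < 1 -> (a <= b)%N -> odd a = odd b ->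
  (fq g1 g2 t a <= fq g1 g2 t b)%N /\ odd (fq g1 g2 t a) = odd (fq g1 g2 t b).
Proof.
move=> t1 ab oab; rewrite !fqE.
have pab := pr_anti ab.
case: ifPn => ha; case: ifPn => hb.
- by rewrite /= oab.
- have nab : a <> b by move=> E; move: ha hb; rewrite E => ->.
  have ab' : (a < b)%N by rewrite ltn_neqAle ab andbT; apply/eqP.
  have := parity_gap ab' oab => g.
  split; first by case: b g {hb nab ab' ab oab pab}.
  have b0 : (0 < b)%N by apply: leq_trans g.
  by rewrite /= odd_pred // oab.
- by exfalso; move: ha; rewrite -leNgt => ha; move: (lt_le_trans (lt_le_trans hb pab) ha); rewrite ltxx.
- have a0 : (0 < a)%N.
    case: a ha {ab oab pab} => // ; rewrite pr0 -leNgt => h.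
    by move: (lt_le_trans t1 h); rewrite ltxx.
  have b0 : (0 < b)%N by apply: leq_trans ab.
  split; first by rewrite -ltnS !prednK.
  by rewrite !odd_pred // oab.
Qed.
Lemma phiSr n (q : noise R) x :
  phi g1 g2 n.+1 q x = fq g1 g2 (iter n (@theta R) q) (phi g1 g2 n q x).
Proof. by []. Qed.

Lemma inv_all (q : noise R) x y : (forall k, q k < 1) -> (x <= y)%N -> odd x = odd y ->
  forall n, (phi g1 g2 n q x <= phi g1 g2 n q y)%N /\ odd (phi g1 g2 n q x) = odd (phi g1 g2 n q y).
Proof.
move=> q1 xy oxy; elim=> [|n [IH1 IH2]] //.
rewrite !phiSr; apply: step_inv => //; by rewrite iter_theta.
Qed.

Lemma nomeet_high (q : noise R) x y : (forall k, q k < 1) -> (x <= y)%N -> odd x = odd y ->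
  ~ (exists n, phi g1 g2 n q x = phi g1 g2 n q y) ->
  forall n, (2 <= phi g1 g2 n q y)%N.
Proof.
move=> q1 xy oxy nm n; have [h1 h2] := inv_all q1 xy oxy n.
rewrite leqNgt; apply/negP => lt2; apply: nm; exists n.
move: h1 h2 lt2; case: (phi g1 g2 n q y) => [|[|]] //; case: (phi g1 g2 n q x) => [|[|]] //.
Qed.
Fixpoint hN (N y : nat) : R :=
  match N with
  | 0 => if (2 <= y)%N then 1 else 0
  | N'.+1 => if (2 <= y)%N then pr y * hN N' y.+1 + (1 - pr y) * hN N' y.-1 else 0
  end.

Lemma hN_bnd N y : 0 <= hN N y <= 1.
Proof.
elim: N y => [|N IH] y /=; first by case: (1 < y)%N; rewrite ?lexx ?ler01.
case: (1 < y)%N; last by rewrite lexx ler01.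
have p0 := ltW (pr_gt0 y); have p1 := pr_le1 y.
have /andP[a1 a2] := IH y.+1; have /andP[b1 b2] := IH y.-1.
apply/andP; split; first by rewrite addr_ge0 // mulr_ge0 // subr_ge0.
apply: (@le_trans _ _ (pr y * 1 + (1 - pr y) * 1)).
  by rewrite lerD // ler_wpM2l // subr_ge0.
by rewrite !mulr1 addrC subrK.
Qed.

Lemma hNS N y : hN N.+1 y =
  if (1 < y)%N then pr y * hN N y.+1 + (1 - pr y) * hN N y.-1 else 0.
Proof. by []. Qed.

Lemma hN_decr N y : hN N.+1 y <= hN N y.
Proof.
elim: N y => [|N IH] y.
  have /andP[_ h] := hN_bnd 1 y.
  by move: h; rewrite [hN 1 y]/= [hN 0 y]/=; case: (1 < y)%N.
rewrite (hNS N.+1 y) (hNS N y); case: (1 < y)%N => //.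
have p0 := ltW (pr_gt0 y); have p1 := pr_le1 y.
by rewrite lerD // ler_wpM2l // ?subr_ge0.
Qed.

Lemma hN_noninc y : {homo (fun N => hN N y) : n m / (n <= m)%N >-> m <= n}.
Proof.
move=> n m /= nm; elim: m nm => [|m IH]; first by rewrite leqn0 => /eqP ->.
rewrite leq_eqVlt => /orP[/eqP -> //|]; rewrite ltnS => /IH.
exact: le_trans (hN_decr m y).
Qed.

Lemma hN_cvg y : cvgn (fun N => hN N y).
Proof.
apply: nonincreasing_is_cvgn; first exact: hN_noninc.
by exists 0 => _ [N _ <-]; have /andP[] := hN_bnd N y.
Qed.

Definition hl y := limn (fun N => hN N y).

Lemma hl_le y N : hl y <= hN N y.
Proof. exact: (@nonincreasing_cvgn_ge R (fun N => hN N y) (@hN_noninc y) (@hN_cvg y) N). Qed.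

Lemma hl_bnd y : 0 <= hl y <= 1.
Proof.
apply/andP; split; last by apply: le_trans (hl_le y 0) _; have /andP[] := hN_bnd 0 y.
apply: limr_ge; first exact: hN_cvg.
by near=> N; have /andP[] := hN_bnd N y.
Unshelve. all: by end_near.
Qed.

Lemma hl_small y : (y < 2)%N -> hl y = 0.
Proof.
move=> y2; apply/eqP; rewrite eq_le; have /andP[-> _] := hl_bnd y; rewrite andbT.
by apply: le_trans (hl_le y 0) _; rewrite /= leqNgt y2.
Qed.

Lemma hl_harm y : (2 <= y)%N -> hl y = pr y * hl y.+1 + (1 - pr y) * hl y.-1.
Proof.
move=> y2.
have c1 : (fun N => hN N.+1 y) @ \oo --> hl y.
  by rewrite (cvg_shiftS (fun N => hN N y)); exact: hN_cvg.
have E : (fun N => hN N.+1 y) = (fun N => pr y * hN N y.+1 + (1 - pr y) * hN N y.-1).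
  by apply: funext => N /=; rewrite y2.
have c2 : (fun N => pr y * hN N y.+1 + (1 - pr y) * hN N y.-1) @ \oo --> pr y * hl y.+1 + (1 - pr y) * hl y.-1.
  apply: cvgD; apply: cvgMr; exact: hN_cvg.
rewrite E in c1.
have h1 := cvg_lim (@Rhausdorff R) c1. have h2 := cvg_lim (@Rhausdorff R) c2. by rewrite -h1 -h2.
Qed.
Lemma ratioE y : 1 - pr y = pr y * (g2 * y%:R / g1).
Proof.
have h2 := den_gt0 y; rewrite /pr; field.
by apply/andP; split; rewrite gt_eqF.
Qed.

Lemma diff_rec y : (2 <= y)%N ->
  hl y.+1 - hl y = (g2 * y%:R / g1) * (hl y - hl y.-1).
Proof.
move=> y2; have h := hl_harm y2.
have p0 : pr y != 0 by rewrite gt_eqF // pr_gt0.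
apply: (mulfI p0); rewrite mulrA -ratioE.
have e : pr y * (hl y.+1 - hl y) - (1 - pr y) * (hl y - hl y.-1) =
  (pr y * hl y.+1 + (1 - pr y) * hl y.-1) - hl y by ring.
by rewrite -h subrr in e; apply/eqP; rewrite -subr_eq0 e.
Qed.

Lemma hl2 : hl 2 = 0.
Proof.
have /andP[h0 _] := hl_bnd 2.
rewrite le_eqVlt in h0; case/orP: h0 => [/eqP <- //|hpos].
exfalso.
pose d y := hl y.+1 - hl y.
have dpos : forall y, (0 < y)%N -> 0 < d y.
  elim=> // y IH _; case: y IH => [|y] IH.
    by rewrite /d (hl_small (y:=1)) // subr0.
  rewrite /d diff_rec // mulr_gt0 // ?IH //.
  by rewrite divr_gt0 // mulr_gt0 // ltr0n.
pose M := (Num.Def.archi_bound (g1 / g2)).+2.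
have rM : forall j, (M <= j)%N -> 1 <= g2 * j%:R / g1.
  move=> j Mj; rewrite ler_pdivlMr // mul1r mulrC -ler_pdivrMr //.
  apply: (le_trans (ltW (archi_boundP _))); first by rewrite divr_ge0 // ltW.
  rewrite ler_nat; apply: leq_trans Mj; by rewrite /M -addn2 leq_addr.
have dmono : forall k, d M <= d (M + k)%N.
  elim=> [|k IH]; first by rewrite addn0.
  apply: (le_trans IH).
  have dk : 0 < d (M + k)%N by apply: dpos; rewrite addn_gt0.
  rewrite {2}/d addnS (diff_rec (y := (M + k).+1)); last by rewrite ltnS addn_gt0.
  rewrite -/(d (M + k)%N) -[X in X <= _]mul1r ler_pM2r //.
  by apply: rM; rewrite ltnW // ltnS leq_addr.
have hgrow : forall k, k%:R * d M <= hl (M + k)%N.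
  elim=> [|k IH]; first by rewrite mul0r; have /andP[] := hl_bnd (M + 0)%N.
  rewrite addnS -[hl _.+1](subrK (hl (M + k)%N)) -/(d (M + k)%N).
  by rewrite mulrSr mulrDl mul1r addrC lerD.
have dM0 : 0 < d M by apply: dpos.
have := hgrow (Num.Def.archi_bound (1 / d M)).
have /andP[_ h1] := hl_bnd (M + Num.Def.archi_bound (1 / d M))%N.
move=> h2; have := le_trans h2 h1.
rewrite -ler_pdivlMr // mul1r => h3.
have := archi_boundP (ltW (divr_gt0 ltr01 dM0)).
by rewrite div1r ltNge h3.
Qed.

Lemma hl0 y : hl y = 0.
Proof.
suff: hl y = 0 /\ hl y.+1 = 0 by case.
elim: y => [|y [IH1 IH2]]; first by rewrite !hl_small.
split => //; case: y IH1 IH2 => [|y] IH1 IH2; first exact: hl2.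
have := hl_harm (y:=y.+2) isT; rewrite IH2 /= IH1 mulr0 addr0 => /esym/eqP.
by rewrite mulf_eq0 gt_eqF ?pr_gt0 //= => /eqP.
Qed.
Variable (P : {measure set (Qspace R) -> \bar R}).
Hypothesis hP : noise_law P.

Definition coordset k (B : set R) : set (Qspace R) := [set q | B (q k)].

Lemma meas_coord k B : measurable B -> measurable (coordset k B).
Proof. by move=> mB; apply: sub_sigma_algebra; exists k, B. Qed.

Definition Rect k (C : nat -> set R) : set (Qspace R) :=
  [set q | forall i, (i < k)%N -> C i (q i)].

Lemma RectS k C : Rect k.+1 C = Rect k C `&` coordset k (C k).
Proof.
apply/seteqP; split => q /=.
  by move=> h; split; [move=> i ik; apply: h; rewrite ltnS ltnW|apply: h].
move=> [h1 h2] i; rewrite ltnS leq_eqVlt => /orP[/eqP -> //|]; exact: h1.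
Qed.

Lemma meas_rect k C : (forall i, measurable (C i)) -> measurable (Rect k C).
Proof.
move=> mC; elim: k => [|k IH].
  by have -> : Rect 0 C = setT by apply/seteqP; split.
by rewrite RectS; apply: measurableI => //; exact: meas_coord.
Qed.

Definition Lam k (C : nat -> set R) : \bar R :=
  (\prod_(i < k) (@lebesgue_measure R) (C i `&` `[0%R, 1%R]))%E.

Lemma P_rect k C : (forall i, measurable (C i)) -> P (Rect k C) = Lam k C.
Proof.
move=> mC; have := (proj2 hP) k (fun i : 'I_k => C i) (fun i => mC i).
suff -> : Rect k C = [set q : Qspace R | forall i : 'I_k, C i (q i)] by [].
apply/seteqP; split => q /= h.
  by move=> i; apply: h.
by move=> i ik; exact: (h (Ordinal ik)).
Qed.

Lemma Lam_ge0 k C : (0 <= Lam k C)%E.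
Proof. by apply: prode_ge0 => i _; exact: measure_ge0. Qed.

Definition ext (C : nat -> set R) k (I : set R) : nat -> set R :=
  fun i => if i == k then I else C i.

Lemma Rect_ext k C I : Rect k.+1 (ext C k I) = Rect k C `&` coordset k I.
Proof.
rewrite RectS /ext eqxx; congr (_ `&` _).
apply/seteqP; split => q /= h i ik; have := h i ik; by rewrite (ltn_eqF ik).
Qed.

Lemma Lam_ext k C I : Lam k.+1 (ext C k I) =
  (Lam k C * (@lebesgue_measure R) (I `&` `[0%R, 1%R]))%E.
Proof.
rewrite /Lam big_ord_recr /= /ext eqxx; congr (_ * _)%E.
by apply: eq_bigr => i _; rewrite (ltn_eqF (ltn_ord i)).
Qed.

Lemma leb_lo (p : R) : 0 <= p ->
  ((@lebesgue_measure R) (`]-oo, p[ `&` `[0%R, 1%R]) <= p%:E)%E.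
Proof.
move=> p0.
apply: (@le_trans _ _ ((@lebesgue_measure R) `[0%R, p])).
  apply: le_measure; rewrite ?inE; [apply: measurableI|..] => //.
  move=> x /=; rewrite !in_itv /= => -[xp /andP[x0 _]].
  by rewrite x0 ltW.
rewrite lebesgue_measure_itv /= lte_fin.
by case: ltP => // _; rewrite oppr0 adde0.
Qed.

Lemma leb_hi (p : R) : p <= 1 ->
  ((@lebesgue_measure R) (`[p, +oo[ `&` `[0%R, 1%R]) <= (1 - p)%:E)%E.
Proof.
move=> p1.
apply: (@le_trans _ _ ((@lebesgue_measure R) `[p, 1%R])).
  apply: le_measure; rewrite ?inE; [apply: measurableI|..] => //.
  move=> x /=; rewrite !in_itv /= => -[] //.
  by rewrite andbT => -> /andP[_ ->].
rewrite lebesgue_measure_itv /= lte_fin.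
by case: ltP => // _; rewrite lee_fin subr_ge0.
Qed.
Fixpoint Surv (k N y : nat) : set (Qspace R) :=
  match N with
  | 0 => if (1 < y)%N then setT else set0
  | N'.+1 => if (1 < y)%N then
      (coordset k `]-oo, pr y[ `&` Surv k.+1 N' y.+1) `|`
      (coordset k `[pr y, +oo[ `&` Surv k.+1 N' y.-1)
    else set0
  end.

Lemma meas_Surv N k y : measurable (Surv k N y).
Proof.
elim: N k y => [|N IH] k y /=; first by case: ifP.
case: ifP => // _; apply: measurableU; apply: measurableI => //;
  exact: meas_coord.
Qed.

Lemma key N k y C : (forall i, measurable (C i)) ->
  (P (Rect k C `&` Surv k N y) <= Lam k C * (hN N y)%:E)%E.
Proof.
elim: N k y C => [|N IH] k y C mC.
  rewrite /=; case: ifP => _.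
    by rewrite setIT P_rect // mule1.
  by rewrite setI0 measure0 mule_ge0 // Lam_ge0.
rewrite hNS [Surv _ _ _]/=; case: ifP => _; last first.
  by rewrite setI0 measure0 mule0.
have mI1 : measurable (`]-oo, pr y[ : set R) by [].
have mI2 : measurable (`[pr y, +oo[ : set R) by [].
have mC1 : forall i, measurable (ext C k `]-oo, pr y[ i).
  by move=> i; rewrite /ext; case: ifP.
have mC2 : forall i, measurable (ext C k `[pr y, +oo[ i).
  by move=> i; rewrite /ext; case: ifP.
rewrite setIUr !setIA -!Rect_ext.
have mA : measurable (Rect k.+1 (ext C k `]-oo, pr y[) `&` Surv k.+1 N y.+1).
  by apply: measurableI; [exact: meas_rect|exact: meas_Surv].
have mB : measurable (Rect k.+1 (ext C k `[pr y, +oo[) `&` Surv k.+1 N y.-1).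
  by apply: measurableI; [exact: meas_rect|exact: meas_Surv].
apply: le_trans (measureU2 P mA mB) _.
apply: le_trans (leeD (IH _ _ _ mC1) (IH _ _ _ mC2)) _.
rewrite !Lam_ext -!muleA -ge0_muleDr; first last.
- by apply: mule_ge0; [exact: measure_ge0|rewrite lee_fin; have /andP[] := hN_bnd N y.-1].
- by apply: mule_ge0; [exact: measure_ge0|rewrite lee_fin; have /andP[] := hN_bnd N y.+1].
apply: lee_wpmul2l; first exact: Lam_ge0.
have /andP[a0 _] := hN_bnd N y.+1; have /andP[b0 _] := hN_bnd N y.-1.
rewrite EFinD !EFinM; apply: leeD; apply: lee_pmul => //; try exact: measure_ge0.
- exact: leb_lo (ltW (pr_gt0 y)).
- exact: leb_hi (pr_le1 y).
Qed.
Lemma surv_of N k y (q : noise R) :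
  (forall n, (n <= N)%N -> (1 < phi g1 g2 n (iter k (@theta R) q) y)%N) ->
  Surv k N y q.
Proof.
elim: N k y => [|N IH] k y h.
  by rewrite /=; have := h 0%N (leqnn 0) => /= ->.
have y1 : (1 < y)%N by exact: (h 0%N isT).
have hS : forall n, (n <= N)%N ->
    (1 < phi g1 g2 n (iter k.+1 (@theta R) q) (fq g1 g2 (iter k (@theta R) q) y))%N.
  by move=> n nN; have := h n.+1 nN; rewrite phiS.
rewrite /= y1; move: hS; rewrite fqE iter_theta add0n.
case: ltP => qk hS; [left|right]; split.
- by rewrite /coordset /= in_itv /= qk.
- exact: IH.
- by rewrite /coordset /= in_itv /= qk.
- exact: IH.
Qed.

Definition Z y : set (Qspace R) := \bigcap_N Surv 0 N y.

Lemma meas_Z y : measurable (Z y).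
Proof. by apply: bigcapT_measurable => N; exact: meas_Surv. Qed.

Lemma PZ y : P (Z y) = 0%E.
Proof.
have hb : forall N, (P (Z y) <= (hN N y)%:E)%E.
  move=> N; apply: (@le_trans _ _ (P (Rect 0 (fun _ => setT) `&` Surv 0 N y))).
    apply: le_measure; rewrite ?inE; first exact: meas_Z.
      by apply: measurableI; [apply: meas_rect|apply: meas_Surv].
    by move=> q Zq; split => //; apply: Zq.
  apply: le_trans (key _ _ _ _) _ => //.
  by rewrite /Lam big_ord0 mul1e.
have fin : P (Z y) \is a fin_num.
  rewrite ge0_fin_numE ?measure_ge0 //; apply: le_lt_trans (hb 0%N) _; exact: ltry.
rewrite -(fineK fin); congr (_%:E); apply/eqP; rewrite eq_le; apply/andP; split.
  rewrite -(hl0 y); apply: limr_ge; first exact: hN_cvg.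
  by near=> N; rewrite -lee_fin fineK //; exact: hb.
by rewrite -lee_fin fineK // measure_ge0.
Unshelve. all: by end_near.
Qed.

Definition O k : set (Qspace R) := coordset k `[1%R, +oo[.

Lemma meas_O k : measurable (O k).
Proof. exact: meas_coord. Qed.

Lemma PO k : P (O k) = 0%E.
Proof.
have E : O k = Rect k.+1 (ext (fun _ => setT) k `[1%R, +oo[).
  rewrite Rect_ext; apply/seteqP; split => q /=.
    by move=> h; split.
  by case.
rewrite E P_rect; last by move=> i; rewrite /ext; case: ifP.
rewrite Lam_ext; apply/eqP; rewrite eq_le; apply/andP; split; last first.
  by apply: mule_ge0; [exact: Lam_ge0|exact: measure_ge0].
apply: le_trans (lee_wpmul2l (Lam_ge0 _ _) (leb_hi (lexx 1))) _.
by rewrite subrr mule0.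
Qed.
End All.

Theorem corollary3p4 (R : realType) (g1 g2 : R) (hg1 : 0 < g1) (hg2 : 0 < g2)
  (P : {measure set (Qspace R) -> \bar R}) (hP : noise_law P) :
  partially_synchronizing P (phi g1 g2) W01.
Proof.
split.
  split.
    move=> x; case ox: (odd x).
      by exists ord_max; rewrite /W01 /= ox.
    by exists ord0; rewrite /W01 /= ox.
  split.
    move=> i j x; rewrite /W01 /= => -> /eqP.
    by case: i => [[|[|]]] //= ?; case: j => [[|[|]]] //= ? _; apply: val_inj.
  by move=> i; exists (val i); rewrite /W01 /=; case: i => [[|[|]]].
move=> i x y; rewrite /W01 /= => ox oy.
have oxy : odd x = odd y by rewrite ox oy.
rewrite /almost_everywhere.
apply: (@negligibleS _ _ _ P ((\bigcup_k O k) `|` (Z g1 g2 x `|` Z g1 g2 y))).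
  move=> q /= nm.
  have [[k qk]|q1] := pselect (exists k, 1 <= q k).
    by left; exists k => //; rewrite /O /coordset /= in_itv /= qk.
  have q1' : forall k, q k < 1.
    by move=> k; rewrite ltNge; apply/negP => h; apply: q1; exists k.
  right.
  have [xy|yx] := leqP x y.
    right => N _; apply: surv_of => n _.
    exact: (nomeet_high hg1 hg2 q1' xy oxy nm n).
  left => N _; apply: surv_of => n _.
  apply: (nomeet_high hg1 hg2 q1' (ltnW yx) (esym oxy)) => -[m hm]; apply: nm.
  by exists m.
apply: negligibleU.
  apply: negligible_bigcup => k; apply/negligibleP; first exact: meas_O.
  exact: PO.
by apply: negligibleU; apply/negligibleP; [exact: meas_Z|exact: PZ|exact: meas_Z|exact: PZ].
Qed.
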